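(* Let $G$ be a finite simple graph, $\mathbb{K}$ a field, $R=\mathbb{K}[z:z\in V(G)]$, and $I_3(G)\subseteq R$ its $3$-path ideal. Let $e=\{x,y\}\in E(G)$. Then: (1) $I_3(G):xy=L+J$, where $L=\langle z : z\in N_G(e)\rangle$ and $J=I_3(G\setminus N_G[e])R$. (2) $(I_3(G)+\langle xy\rangle):x=\langle y\rangle+I_2(H)+I_3(G\setminus N_G[x])R$, where $H$ is the graph whose edge set is the union of $N_G^{\mathrm{edge}}(x)$ and the edge set of the complete graph on the vertex set $N_G(x)\setminus\{y\}$.
   Context: A $3$-path in $G$ is a sequence of three distinct vertices $a,b,c$ with $\{a,b\},\{b,c\}\in E(G)$; $I_3(G)=\langle abc : a,b,c \text{ a } 3\text{-path in } G\rangle$. For a subset $S\subseteq V(G)$, $G\setminus S$ denotes the induced subgraph of $G$ on $V(G)\setminus S$, and its $3$-path ideal is regarded inside $R$. $N_G(z)$ is the set of neighbors of $z$, $N_G[z]=N_G(z)\cup\{z\}$. For an edge $e=\{x,y\}$, $N_G(e)=(N_G(x)\setminus\{y\})\cup(N_G(y)\setminus\{x\})$ and $N_G[e]=N_G[x]\cup N_G[y]$. For a vertex $x$, $N_G^{\mathrm{edge}}(x)=\{\{a,b\}\in E(G) : x,a,b \text{ is a } 3\text{-path in } G\}$. For a graph $H$, $I_2(H)$ is its edge ideal, generated by $ab$ for $\{a,b\}\in E(H)$. *)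

(* Defs.v *)
From HB Require Import structures.
From mathcomp Require Import all_boot all_order all_algebra.
From mathcomp Require Import mpoly.
Set Implicit Arguments. Unset Strict Implicit. Unset Printing Implicit Defensive.
Import GRing.Theory.
Local Open Scope ring_scope.

(* A finite simple graph on vertex set 'I_n is a symmetric irreflexive
   relation [adj]; the ring is R = K[X_0, ..., X_{n-1}] = {mpoly K[n]},
   the variable X_z corresponding to vertex z. *)

Section Defs.
Variables (K : fieldType) (n : nat).
Notation R := {mpoly K[n]}.

Definition simple_graph (adj : rel 'I_n) : Prop :=
  ssrbool.symmetric adj /\ ssrbool.irreflexive adj.

Definition gen_ideal (S : R -> Prop) : R -> Prop :=
  fun p => exists (m : nat) (c g : 'I_m -> R),
    (forall i, S (g i)) /\ p = \sum_(i < m) c i * g i.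

Definition ideal_add (A B : R -> Prop) : R -> Prop :=
  gen_ideal (fun p => A p \/ B p).

Definition colon (A : R -> Prop) (f : R) : R -> Prop :=
  fun g => A (g * f).

Definition ideal_eq (A B : R -> Prop) : Prop := forall p, A p <-> B p.

Definition path3 (adj : rel 'I_n) (a b c : 'I_n) : bool :=
  [&& a != b, b != c, a != c, adj a b & adj b c].

(* 3-path ideal of the induced subgraph G[W], regarded inside R. *)
Definition I3 (adj : rel 'I_n) (W : {set 'I_n}) : R -> Prop :=
  gen_ideal (fun p => exists a b c, [&& a \in W, b \in W, c \in W & path3 adj a b c]
                                   /\ p = 'X_a * 'X_b * 'X_c).

Definition I2 (hadj : rel 'I_n) : R -> Prop :=
  gen_ideal (fun p => exists a b, hadj a b /\ p = 'X_a * 'X_b).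

Definition var_ideal (Z : {set 'I_n}) : R -> Prop :=
  gen_ideal (fun p => exists z, z \in Z /\ p = 'X_z).

Definition princ (f : R) : R -> Prop := gen_ideal (fun p => p = f).

Definition nbhd (adj : rel 'I_n) (z : 'I_n) : {set 'I_n} := [set w | adj z w].
Definition cnbhd (adj : rel 'I_n) (z : 'I_n) : {set 'I_n} := z |: nbhd adj z.

Definition enbhd (adj : rel 'I_n) (x y : 'I_n) : {set 'I_n} :=
  (nbhd adj x :\ y) :|: (nbhd adj y :\ x).
Definition cenbhd (adj : rel 'I_n) (x y : 'I_n) : {set 'I_n} :=
  cnbhd adj x :|: cnbhd adj y.

(* {a,b} in N^edge_G(x): {a,b} in E(G) and x,a,b is a 3-path
   (as an unordered edge: one of the two orientations is a 3-path from x). *)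
Definition edge_nbhd (adj : rel 'I_n) (x : 'I_n) : rel 'I_n :=
  fun a b => adj a b && (path3 adj x a b || path3 adj x b a).

Definition Hgraph (adj : rel 'I_n) (x y : 'I_n) : rel 'I_n :=
  fun a b => edge_nbhd adj x a b ||
             [&& a != b, a \in nbhd adj x :\ y & b \in nbhd adj x :\ y].

End Defs.

(* Main.v *)
Require Import Defs.
From HB Require Import structures.
From mathcomp Require Import all_boot all_order all_algebra.
From mathcomp Require Import mpoly.
From mathcomp Require Import zify ring.
Set Implicit Arguments. Unset Strict Implicit. Unset Printing Implicit Defensive.
Import GRing.Theory.
Local Open Scope ring_scope.

Section Gen.
Variables (K : fieldType) (n : nat).
Local Notation R := {mpoly K[n]}.
Implicit Types (S P A : R -> Prop).

Definition is_ideal P := [/\ P 0, (forall a b, P a -> P b -> P (a + b)) &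
   (forall c a, P a -> P (c * a))].

Lemma gen_is_ideal S : is_ideal (gen_ideal S).
Proof.
split.
- exists 0%N, (fun _ => 0), (fun _ => 0); split; [by case | by rewrite big_ord0].
- move=> a b [m1 [c1 [g1 [H1 ->]]]] [m2 [c2 [g2 [H2 ->]]]].
  exists (m1 + m2)%N, (fun i => match split i with inl j => c1 j | inr j => c2 j end),
     (fun i => match split i with inl j => g1 j | inr j => g2 j end); split.
  + by move=> i; case: (split i).
  + rewrite big_split_ord /=; congr (_ + _); apply: eq_bigr => i _.
    * by rewrite -[lshift _ _]/(unsplit (inl i)) unsplitK.
    * by rewrite -[rshift _ _]/(unsplit (inr i)) unsplitK.
- move=> c a [m [c1 [g [H ->]]]]; exists m, (fun i => c * c1 i), g; split=> //.
  by rewrite mulr_sumr; apply: eq_bigr => i _; rewrite mulrA.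
Qed.

Lemma gen_sub S P : is_ideal P -> (forall s, S s -> P s) ->
  forall p, gen_ideal S p -> P p.
Proof.
case=> P0 PD PM HS p [m [c [g [Hg ->]]]].
by apply: (big_ind P) => // i _; apply/PM/HS/Hg.
Qed.

Lemma gen_base S s : S s -> gen_ideal S s.
Proof.
by move=> Hs; exists 1%N, (fun _ => 1), (fun _ => s); split => //; rewrite big_ord1 mul1r.
Qed.

Lemma gen_mono S T p : (forall s, S s -> T s) -> gen_ideal S p -> gen_ideal T p.
Proof. by move=> H; apply: (gen_sub (gen_is_ideal T)) => s /H /gen_base. Qed.

Lemma colon_is_ideal A f : is_ideal A -> is_ideal (colon A f).
Proof.
case=> A0 AD AM; split; rewrite /colon.
- by rewrite mul0r.
- by move=> a b Ha Hb; rewrite mulrDl; apply: AD.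
- by move=> c a Ha; rewrite -mulrA; apply: AM.
Qed.

Lemma ideal_add_l A B p : A p -> ideal_add A B p.
Proof. by move=> H; apply: gen_base; left. Qed.
Lemma ideal_add_r A B p : B p -> ideal_add A B p.
Proof. by move=> H; apply: gen_base; right. Qed.

Lemma ideal_of_monos P g : is_ideal P ->
  (forall u, u \in msupp g -> P 'X_[u]) -> P g.
Proof.
case=> P0 PD PM H; rewrite (mpolyE g) big_seq; apply: (big_ind P) => // u Hu.
by rewrite -mul_mpolyC; apply/PM/H.
Qed.

Lemma mpolyX_inj m1 m2 : 'X_[m1] = 'X_[m2] :> R -> m1 = m2.
Proof.
move=> /(congr1 (mcoeff m2)); rewrite !mcoeffX eqxx.
case: eqP => // _ /eqP; rewrite eq_sym oner_eq0.
by [].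
Qed.

Definition monomial S := forall s, S s -> exists m, s = 'X_[m].

Lemma mono_gen S p u : monomial S -> gen_ideal S p -> u \in msupp p ->
  exists m, S 'X_[m] /\ (m <= u)%MM.
Proof.
move=> HS [k [c [g [Hg ->]]]] /msupp_sum_le /flattenP [s /mapP [i _ ->]] Hu.
have [m Hm] := HS _ (Hg i); rewrite Hm in Hu; exists m; split; first by rewrite -Hm.
by move: Hu; rewrite (perm_mem (msuppMX _ _)) => /mapP [m' _ ->]; apply: lem_addr.
Qed.

Lemma mono_div P u w : is_ideal P -> (w <= u)%MM -> P 'X_[w] -> P 'X_[u].
Proof. by case=> _ _ PM le Pw; rewrite -(submK le) mpolyXD; apply: PM. Qed.

Lemma le_sub (m m0 u w : 'X_{1..n}) : (m <= m0 + u)%MM -> (w <= m)%MM ->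
  (forall i, (0 < m0 i)%N -> w i = 0%N) -> (w <= u)%MM.
Proof.
move=> /mnm_lepP h1 /mnm_lepP h2 h3; apply/mnm_lepP => i.
case: (posnP (m0 i)) => [e|/h3 -> //].
by move: (h1 i) (h2 i); rewrite mnmDE e; lia.
Qed.

Lemma colon_incl S P m0 g : is_ideal P -> monomial S ->
  (forall m u, S 'X_[m] -> (m <= m0 + u)%MM -> P 'X_[u]) ->
  gen_ideal S (g * 'X_[m0]) -> P g.
Proof.
move=> HP HS H Hg; apply: (ideal_of_monos HP) => u Hu.
have Hu' : (m0 + u)%MM \in msupp (g * 'X_[m0]).
  by rewrite mcoeff_msupp mcoeffMX -mcoeff_msupp.
have [m [Sm le]] := mono_gen HS Hg Hu'.
exact: H Sm le.
Qed.

End Gen.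

Section Comb.
Variable n : nat.

Lemma comb1 (adj : rel 'I_n) x y a b c : ssrbool.symmetric adj -> irreflexive adj ->
  path3 adj a b c -> a \notin enbhd adj x y -> b \notin enbhd adj x y ->
  c \notin enbhd adj x y ->
  [&& a \notin cenbhd adj x y, b \notin cenbhd adj x y & c \notin cenbhd adj x y].
Proof.
move=> sym irr /and5P[ab bc ac hab hbc] nEa nEb nEc.
have Q3 : forall z, z \in cenbhd adj x y -> z \notin enbhd adj x y ->
    (z == x) || (z == y).
  move=> z; rewrite /cenbhd /enbhd /cnbhd /nbhd !inE.
  case: (eqVneq z x) => //= zx; case: (eqVneq z y) => //= zy.
  by case: (adj x z); case: (adj y z).
have Q1 : forall z w, (z == x) || (z == y) -> adj z w ->
    w \notin enbhd adj x y -> (w == x) || (w == y).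
  move=> z w Hz hzw; apply: Q3; rewrite /cenbhd /cnbhd /nbhd !inE.
  by case/orP: Hz => /eqP <-; rewrite hzw ?orbT.
have Q2 : forall a b c, a != b -> b != c -> a != c -> (a == x) || (a == y) ->
    (b == x) || (b == y) -> (c == x) || (c == y) -> False.
  move=> a' b' c' + + + Ha Hb Hc.
  by case/orP: Ha => /eqP->; case/orP: Hb => /eqP->; case/orP: Hc => /eqP->;
     rewrite ?eqxx.
apply/and3P; split; apply/negP => hC.
- have Qa := Q3 a hC nEa; have Qb := Q1 a b Qa hab nEb.
  have Qc := Q1 b c Qb hbc nEc; exact: Q2 a b c ab bc ac Qa Qb Qc.
- have Qb := Q3 b hC nEb; have Qa := Q1 b a Qb ltac:(by rewrite sym) nEa.
  have Qc := Q1 b c Qb hbc nEc; exact: Q2 a b c ab bc ac Qa Qb Qc.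
- have Qc := Q3 c hC nEc; have Qb := Q1 c b Qc ltac:(by rewrite sym) nEb.
  have Qa := Q1 b a Qb ltac:(by rewrite sym) nEa; exact: Q2 a b c ab bc ac Qa Qb Qc.
Qed.

Lemma Ule3 (a b c z : 'I_n) : [|| z == a, z == b | z == c] ->
  (U_(z) <= U_(a) + U_(b) + U_(c))%MM.
Proof.
move=> H; apply/mnm_lepP => i; rewrite !mnmDE !mnm1E.
by case/or3P: H => /eqP ->; lia.
Qed.

Lemma Ule_ab (a b c : 'I_n) : (U_(a) + U_(b) <= U_(a) + U_(b) + U_(c))%MM.
Proof. by apply/mnm_lepP => i; rewrite !mnmDE; lia. Qed.
Lemma Ule_bc (a b c : 'I_n) : (U_(b) + U_(c) <= U_(a) + U_(b) + U_(c))%MM.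
Proof. by apply/mnm_lepP => i; rewrite !mnmDE; lia. Qed.
Lemma Ule_ac (a b c : 'I_n) : (U_(a) + U_(c) <= U_(a) + U_(b) + U_(c))%MM.
Proof. by apply/mnm_lepP => i; rewrite !mnmDE; lia. Qed.

Lemma cond_xy (w : 'X_{1..n}) x y : w x = 0%N -> w y = 0%N ->
  forall i, (0 < (U_(x) + U_(y))%MM i)%N -> w i = 0%N.
Proof.
move=> hx hy i; rewrite mnmDE !mnm1E.
by case: (eqVneq x i) => [<-//|_]; case: (eqVneq y i) => [<-//|].
Qed.

Lemma cond_x (w : 'X_{1..n}) x : w x = 0%N ->
  forall i, (0 < (U_(x))%MM i)%N -> w i = 0%N.
Proof. by move=> hx i; rewrite !mnm1E; case: (eqVneq x i) => [<-//|]. Qed.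

Lemma m1_0 (a z : 'I_n) : a != z -> (U_(a))%MM z = 0%N.
Proof. by rewrite mnm1E => /negbTE ->. Qed.
Lemma m2_0 (a b z : 'I_n) : a != z -> b != z -> (U_(a) + U_(b))%MM z = 0%N.
Proof. by rewrite !mnmDE !mnm1E => /negbTE -> /negbTE ->. Qed.
Lemma m3_0 (a b c z : 'I_n) : a != z -> b != z -> c != z ->
  (U_(a) + U_(b) + U_(c))%MM z = 0%N.
Proof. by rewrite !mnmDE !mnm1E => /negbTE -> /negbTE -> /negbTE ->. Qed.

End Comb.

Section Main.
Variables (K : fieldType) (n : nat).
Local Notation R := {mpoly K[n]}.

Definition S3 (adj : rel 'I_n) (W : {set 'I_n}) : R -> Prop :=
  fun p => exists a b c, [&& a \in W, b \in W, c \in W & path3 adj a b c]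
                                   /\ p = 'X_a * 'X_b * 'X_c.

Lemma I3E adj W : @I3 K n adj W = gen_ideal (S3 adj W).
Proof. by []. Qed.

Lemma S3_mono adj W : monomial (S3 adj W).
Proof.
by move=> _ [a [b [c [_ ->]]]]; exists (U_(a) + U_(b) + U_(c))%MM; rewrite !mpolyXD.
Qed.

Lemma S3_inv adj W m : S3 adj W 'X_[m] -> exists a b c,
  [&& a \in W, b \in W, c \in W & path3 adj a b c] /\ m = (U_(a) + U_(b) + U_(c))%MM.
Proof.
move=> [a [b [c [H E]]]]; exists a, b, c; split => //.
by apply: (@mpolyX_inj K); rewrite E !mpolyXD.
Qed.


Lemma path3_rev (adj : rel 'I_n) a b c : ssrbool.symmetric adj ->
  path3 adj a b c -> path3 adj c b a.
Proof.
move=> sym /and5P [ab bc ac hab hbc]; apply/and5P; split;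
  by rewrite 1?eq_sym 1?sym.
Qed.

Lemma p1_hard adj x y m u : ssrbool.symmetric adj -> irreflexive adj -> adj x y ->
  S3 adj setT 'X_[m] -> (m <= U_(x) + U_(y) + u)%MM ->
  ideal_add (@var_ideal K n (enbhd adj x y)) (@I3 K n adj (~: cenbhd adj x y)) 'X_[u].
Proof.
move=> sym irr hxy /S3_inv [a [b [c [/and4P [_ _ _ hp] ->]]]] le.
set P := ideal_add _ _.
have HP : is_ideal P := gen_is_ideal _.
have Enx : forall z, z \in enbhd adj x y -> (z != x) && (z != y).
  move=> z; rewrite /enbhd /nbhd !inE => /orP [/andP [zy hz]|/andP [zx hz]].
  - rewrite zy andbT; apply/eqP => zx; by rewrite zx irr in hz.
  - rewrite zx /=; apply/eqP => zy; by rewrite zy irr in hz.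
have varc : forall z, [|| z == a, z == b | z == c] -> z \in enbhd adj x y -> P 'X_[u].
  move=> z hz zE; have /andP [zx zy] := Enx z zE.
  apply: (mono_div HP (w := U_(z)%MM)).
    by apply: (le_sub le (Ule3 hz)); apply: cond_xy; apply: m1_0.
  by apply: ideal_add_l; apply: gen_base; exists z.
case Ea: (a \in enbhd adj x y); first by apply: (varc a) => //; rewrite eqxx.
case Eb: (b \in enbhd adj x y); first by apply: (varc b) => //; rewrite eqxx orbT.
case Ec: (c \in enbhd adj x y); first by apply: (varc c) => //; rewrite eqxx !orbT.
have /and3P [nCa nCb nCc] := comb1 sym irr hp (negbT Ea) (negbT Eb) (negbT Ec).
have Cn : forall z, z \notin cenbhd adj x y -> (z != x) && (z != y).
  move=> z; rewrite /cenbhd /cnbhd !inE.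
  by move/norP => [/norP [zx _] /norP [zy _]]; rewrite zx zy.
have /andP [ax ay] := Cn a nCa; have /andP [bx b_y] := Cn b nCb.
have /andP [cx cy] := Cn c nCc.
apply: (mono_div HP (w := (U_(a) + U_(b) + U_(c))%MM)).
  by apply: (le_sub le (lepm_refl _)); apply: cond_xy; apply: m3_0.
apply: ideal_add_r; apply: gen_base; exists a, b, c; split; last by rewrite !mpolyXD.
by rewrite !in_setC nCa nCb nCc hp.
Qed.

Definition S2 (adj : rel 'I_n) (x y : 'I_n) : R -> Prop :=
  fun p => S3 adj setT p \/ p = 'X_x * 'X_y.

Lemma S2_mono adj x y : monomial (S2 adj x y).
Proof.
move=> s [/S3_mono //|->]; exists (U_(x) + U_(y))%MM; by rewrite mpolyXD.
Qed.

Lemma p2_hard adj x y m u : ssrbool.symmetric adj -> irreflexive adj -> adj x y ->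
  S2 adj x y 'X_[m] -> (m <= U_(x) + u)%MM ->
  ideal_add (ideal_add (princ 'X_y) (@I2 K n (Hgraph adj x y)))
            (@I3 K n adj (~: cnbhd adj x)) 'X_[u].
Proof.
move=> sym irr hxy Hm le.
set P := ideal_add _ _.
have HP : is_ideal P := gen_is_ideal _.
have yx : y != x by apply/eqP => e; rewrite e irr in hxy.
have Py : P 'X_y by apply/ideal_add_l/ideal_add_l/gen_base.
have yc : (U_(y) <= m)%MM -> P 'X_[u] :=
  fun h => mono_div HP (le_sub le h (cond_x (m1_0 yx))) Py.
case: Hm => [|E]; last first.
  have hm : m = (U_(x) + U_(y))%MM by apply: (@mpolyX_inj K); rewrite E mpolyXD.
  by apply: yc; rewrite hm; apply: lem_addl.
move/S3_inv => [a [b [c [/and4P [_ _ _ hp] hm]]]]; have /and5P [ab bc ac hab hbc] := hp.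
case Ya: ([|| y == a, y == b | y == c]); first by apply: yc; rewrite hm; apply: Ule3.
move/negbT: Ya; rewrite !negb_or => /and3P [ya yb yc'].
have H2 : forall p q, Hgraph adj x y p q -> (U_(p) + U_(q) <= m)%MM -> p != x -> q != x ->
    P 'X_[u].
  move=> p q hpq hle px qx; apply: (mono_div HP (w := (U_(p) + U_(q))%MM)).
    exact: (le_sub le hle (cond_x (m2_0 px qx))).
  by apply/ideal_add_l/ideal_add_r/gen_base; exists p, q; split => //; rewrite mpolyXD.
case: (eqVneq a x) => [ax|ax].
  apply: (H2 b c).
  - by rewrite /Hgraph /edge_nbhd hbc -ax hp.
  - by rewrite hm; apply: Ule_bc.
  - by rewrite -ax eq_sym.
  - by rewrite -ax eq_sym.
case: (eqVneq c x) => [cx|cx].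
  apply: (H2 b a).
  - by rewrite /Hgraph /edge_nbhd -cx (path3_rev sym hp) sym hab.
  - by rewrite addmC hm; apply: Ule_ab.
  - by rewrite -cx.
  - by rewrite -cx.
case: (eqVneq b x) => [bx|bx].
  apply: (H2 a c).
  - apply/orP; right; rewrite /nbhd !inE ac -bx hbc (sym b a) hab.
    by rewrite (eq_sym a y) ya (eq_sym c y) yc'.
  - by rewrite hm; apply: Ule_ac.
  - by [].
  - by [].
case hxa: (adj x a).
  apply: (H2 a b) => //; last by rewrite hm; apply: Ule_ab.
  by rewrite /Hgraph /edge_nbhd /path3 hab hxa ab (eq_sym x a) ax (eq_sym x b) bx.
case hxb: (adj x b).
  apply: (H2 a b) => //; last by rewrite hm; apply: Ule_ab.
  by rewrite /Hgraph /edge_nbhd /path3 hab hxb (eq_sym b a) ab (eq_sym x a) ax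
     (eq_sym x b) bx (sym b a) hab orbT.
case hxc: (adj x c).
  apply: (H2 b c) => //; last by rewrite hm; apply: Ule_bc.
  by rewrite /Hgraph /edge_nbhd /path3 hbc hxc (eq_sym c b) bc (eq_sym x c) cx
     (eq_sym x b) bx (sym c b) hbc orbT.
apply: (mono_div HP (w := m)).
  by apply: (le_sub le (lepm_refl _)); apply: cond_x; rewrite hm; apply: m3_0.
apply: ideal_add_r; apply: gen_base; exists a, b, c; split; last by rewrite hm !mpolyXD.
by rewrite /cnbhd /nbhd !inE (negbTE ax) (negbTE bx) (negbTE cx) hxa hxb hxc.
Qed.

End Main.

Lemma I3_sub (K : fieldType) n adj W (p : {mpoly K[n]}) : I3 adj W p -> I3 adj setT p.
Proof.
apply: gen_mono => _ [a [b [c [/and4P [_ _ _ hp] ->]]]].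
by exists a, b, c; split => //; rewrite !in_setT hp.
Qed.

Lemma p1_easy (K : fieldType) n (adj : rel 'I_n) x y g :
  ssrbool.symmetric adj -> irreflexive adj -> adj x y ->
  ideal_add (@var_ideal K n (enbhd adj x y)) (@I3 K n adj (~: cenbhd adj x y)) g ->
  colon (@I3 K n adj setT) ('X_x * 'X_y) g.
Proof.
move=> sym irr hxy.
have HQ := colon_is_ideal ('X_x * 'X_y) (gen_is_ideal (@S3 K n adj setT)).
move=> Hg0; apply: (gen_sub HQ _ Hg0) => s [Hs|Hs].
- apply: (gen_sub HQ _ Hs) => _ [z [zE ->]]; rewrite /colon; apply: gen_base.
  move: zE; rewrite /enbhd /nbhd !inE => /orP [/andP [zy hz]|/andP [zx hz]].
  + exists z, x, y; split; last by rewrite mulrA.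
    rewrite !in_setT /=; apply/and5P; split => //; last by rewrite sym.
      by apply/eqP => e; rewrite e irr in hz.
    by apply/eqP => e; rewrite e irr in hxy.
  + exists x, y, z; split; last by rewrite mulrC.
    rewrite !in_setT /=; apply/and5P; split => //; last by rewrite eq_sym.
      by apply/eqP => e; rewrite e irr in hxy.
    by apply/eqP => e; rewrite e irr in hz.
- have H := I3_sub Hs; rewrite /colon mulrC.
  by case: (gen_is_ideal (@S3 K n adj setT)) => _ _ HM2; apply: HM2.
Qed.

Lemma p2_easy (K : fieldType) n (adj : rel 'I_n) x y g :
  ssrbool.symmetric adj -> irreflexive adj -> adj x y ->
  ideal_add (ideal_add (princ 'X_y) (@I2 K n (Hgraph adj x y)))
            (@I3 K n adj (~: cnbhd adj x)) g ->
  colon (ideal_add (@I3 K n adj setT) (princ ('X_x * 'X_y))) 'X_x g.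
Proof.
move=> sym irr hxy.
have HQ := colon_is_ideal 'X_x
   (gen_is_ideal (fun p => @I3 K n adj setT p \/ princ ('X_x * 'X_y) p)).
move=> Hg0; apply: (gen_sub HQ _ Hg0) => s [Hs|Hs].
- apply: (gen_sub HQ _ Hs) => s' [Hs'|Hs'].
  + apply: (gen_sub HQ _ Hs') => _ ->; rewrite /colon.
    by apply/ideal_add_r/gen_base; rewrite mulrC.
  + apply: (gen_sub HQ _ Hs') => _ [a [b [hab ->]]]; rewrite /colon.
    apply/ideal_add_l/gen_base.
    case/orP: hab => [/andP [_ /orP [hp|hp]]|/and3P [ab ha hb]].
    * by exists x, a, b; split; [rewrite !in_setT | ring].
    * by exists x, b, a; split; [rewrite !in_setT | ring].
    * exists a, x, b; split; last by ring.
      move: ha hb; rewrite /nbhd !inE => /andP [_ ha] /andP [_ hb].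
      rewrite ?in_setT /=; apply/and5P; split => //; last by rewrite sym.
        by apply/eqP => e; rewrite e irr in ha.
      by apply/eqP => e; rewrite e irr in hb.
- have := I3_sub Hs => H; rewrite /colon; apply: ideal_add_l.
  by case: (gen_is_ideal (@S3 K n adj setT)) => _ _ HM2; rewrite mulrC; apply: HM2.
Qed.

Theorem lemma4p1 (K : fieldType) (n : nat) (adj : rel 'I_n) (x y : 'I_n) :
  simple_graph adj -> adj x y ->
  ideal_eq (colon (@I3 K n adj setT) ('X_x * 'X_y))
           (ideal_add (@var_ideal K n (enbhd adj x y))
                      (@I3 K n adj (~: cenbhd adj x y)))
  /\
  ideal_eq (colon (ideal_add (@I3 K n adj setT) (princ ('X_x * 'X_y))) 'X_x)
           (ideal_add (ideal_add (princ 'X_y) (@I2 K n (Hgraph adj x y)))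
                      (@I3 K n adj (~: cnbhd adj x))).
Proof.
rewrite /simple_graph; move=> [sym irr] hxy; split => g; split.
- rewrite /colon -mpolyXD => Hg.
  apply: (colon_incl (gen_is_ideal _) (@S3_mono K n adj setT) _ Hg) => m u Sm le.
  exact: (p1_hard sym irr hxy Sm le).
- exact: p1_easy.
- rewrite /colon => Hg.
  have Hg2 : gen_ideal (S2 adj x y) (g * 'X_[U_(x)]).
    apply: (gen_sub (gen_is_ideal _) _ Hg) => s [Hs|Hs].
      by apply: (gen_mono _ Hs) => t Ht; left.
    by apply: (gen_mono _ Hs) => t Ht; right.
  apply: (colon_incl (gen_is_ideal _) (@S2_mono K n adj x y) _ Hg2) => m u Sm le.
  exact: (p2_hard sym irr hxy Sm le).
- exact: p2_easy.
Qed.
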